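(* Let $X$ be a smooth complex algebraic variety, $f\in\mathcal{O}_X(X)$ nonzero, $\pi\colon X\times\mathbb{C}\to X$ the projection, and $\alpha\in\mathbb{Q}$. Define $\tau_\alpha\colon\pi_*V^\alpha\iota_+\mathcal{O}_X\to\mathcal{M}(f^{-\alpha})$ by $$\tau_\alpha\Big(\sum_{i=0}^pv_i\partial_t^i\delta\Big)=\Big(\sum_{i=0}^pQ_i(\alpha)\frac{v_i}{f^i}\Big)f^{-\alpha},\qquad Q_i(x)=\prod_{j=0}^{i-1}(x+j),\ Q_0=1.$$ Then $\tau_\alpha$ is a morphism of $\mathscr{D}_X$-modules, and, identifying $\mathcal{M}(f^{-\alpha})$ with $\mathcal{M}(f^{-\alpha-1})$ via $wf^{-\alpha}\mapsto(wf)f^{-\alpha-1}$, we have $\tau_{\alpha+1}(tv)=\tau_\alpha(v)$ for every $v\in V^\alpha\iota_+\mathcal{O}_X$ and $\tau_\alpha(\partial_tv)=\alpha\,\tau_{\alpha+1}(v)$ for every $v\in V^{\alpha+1}\iota_+\mathcal{O}_X$.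
   Context: $\iota\colon X\to X\times\mathbb{C}$ is the graph embedding of $f$, $t$ the coordinate on $\mathbb{C}$; $\iota_+\mathcal{O}_X=\bigoplus_{i\ge0}\mathcal{O}_X\partial_t^i\delta$ uniquely, $\delta$ the class of $1/(f-t)$, with $t(v\partial_t^i\delta)=fv\partial_t^i\delta-iv\partial_t^{i-1}\delta$ and $P(v\partial_t^i\delta)=P(v)\partial_t^i\delta-P(f)v\partial_t^{i+1}\delta$ for derivations $P$. $(V^\beta)_{\beta\in\mathbb{Q}}$ is the decreasing Kashiwara–Malgrange $V$-filtration along $t=0$ (with $tV^\beta\subseteq V^{\beta+1}$, $\partial_tV^\beta\subseteq V^{\beta-1}$). $\mathcal{M}(f^{-\alpha})=\mathcal{O}_X[1/f]f^{-\alpha}$, free of rank one over $\mathcal{O}_X[1/f]$, with $P(wf^{-\alpha})=(P(w)-\alpha wP(f)/f)f^{-\alpha}$. *)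

(* Defs.v *)
(* Local algebraic model of the sheaf-theoretic statement:
   O = O_X(U) (sections over a connected affine open), viewed inside its
   fraction field L (char 0); derivations of O_X extended to L. *)
From HB Require Import structures.
From mathcomp Require Import all_boot all_order all_algebra.
Set Implicit Arguments. Unset Strict Implicit. Unset Printing Implicit Defensive.
Import Order.TTheory GRing.Theory Num.Theory.
Local Open Scope ring_scope.

Section Defs.
Variable L : fieldType.

Definition is_subring (O : pred L) : Prop :=
  [/\ 0 \in O, 1 \in O,
      (forall a b, a \in O -> b \in O -> a - b \in O)
    & (forall a b, a \in O -> b \in O -> a * b \in O)].

(* P is a derivation of L preserving O (a vector field on X) *)
Definition is_der (O : pred L) (P : L -> L) : Prop :=
  [/\ (forall a b, P (a + b) = P a + P b),
      (forall a b, P (a * b) = P a * b + a * P b)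
    & (forall a, a \in O -> P a \in O)].

(* Elements of iota_+ O_X : sum_i v_i d_t^i delta  <->  polynomial sum_i v_i X^i *)
Definition coefs_in (O : pred L) (p : {poly L}) : Prop :=
  forall i, p`_i \in O.

(* action of t : t(v d_t^i delta) = f v d_t^i delta - i v d_t^(i-1) delta *)
Definition t_act (f : L) (p : {poly L}) : {poly L} :=
  \poly_(i < size p) (f * p`_i - (i.+1)%:R * p`_i.+1).

Definition dt_act (p : {poly L}) : {poly L} := p * 'X.

(* action of a derivation P : P(v d_t^i delta) = P(v) d_t^i delta - P(f) v d_t^(i+1) delta *)
Definition der_act (P : L -> L) (f : L) (p : {poly L}) : {poly L} :=
  map_poly P p - (P f) *: (p * 'X).

(* action of a derivation on M(f^-alpha): element w f^-alpha is represented by w *)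
Definition Mder_act (P : L -> L) (f : L) (a : rat) (w : L) : L :=
  P w - ratr a * w * P f / f.

Definition Qpoly (i : nat) (x : L) : L := \prod_(j < i) (x + j%:R).

(* tau_alpha (sum v_i d_t^i delta) = (sum Q_i(alpha) v_i / f^i) f^-alpha,
   returned as the coefficient of f^-alpha *)
Definition tau (a : rat) (f : L) (p : {poly L}) : L :=
  \sum_(i < size p) Qpoly i (ratr a) * p`_i / f ^+ i.

(* Axioms of the (decreasing) V-filtration listed in the paper's context:
   each V^b is a D_X-submodule of iota_+ O_X, the family is decreasing,
   t V^b \subset V^(b+1), d_t V^b \subset V^(b-1). *)
Definition is_Vfilt (O : pred L) (f : L) (V : rat -> pred {poly L}) : Prop :=
  (forall b p, p \in V b -> coefs_in O p) /\
      (forall b, 0 \in V b) /\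
      (forall b p q, p \in V b -> q \in V b -> p + q \in V b) /\
      (forall b g p, g \in O -> p \in V b -> g *: p \in V b) /\
      (forall b P p, is_der O P -> p \in V b -> der_act P f p \in V b) /\
      (forall b c p, (b <= c)%R -> p \in V c -> p \in V b) /\
      (forall b p, p \in V b -> t_act f p \in V (b + 1)%R) /\
      (forall b p, p \in V b -> dt_act p \in V (b - 1)%R).

End Defs.

(* Main.v *)
Require Import Defs.
From HB Require Import structures.
From mathcomp Require Import all_boot all_order all_algebra.
From mathcomp Require Import ring.
Import Order.TTheory GRing.Theory Num.Theory.
Local Open Scope ring_scope.

Section Aux.
Variable L : fieldType.

Lemma tauE (a : rat) (f : L) (p : {poly L}) n : (size p <= n)%N ->
  tau a f p = \sum_(i < n) Qpoly i (ratr a) * p`_i * f^-1 ^+ i.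
Proof.
move=> le; rewrite /tau (big_ord_widen n (fun i : nat => Qpoly i (ratr a) * p`_i / f ^+ i) le) big_mkcond /=.
apply: eq_bigr => i _; rewrite exprVn.
case: ifP => // /negbT; rewrite -leqNgt => h.
by rewrite nth_default // mulr0 mul0r.
Qed.

Lemma QS_r (x : L) i : Qpoly i.+1 x = Qpoly i x * (x + i%:R).
Proof. by rewrite /Qpoly big_ord_recr. Qed.

Lemma QS_l (x : L) i : Qpoly i.+1 x = x * Qpoly i (x + 1).
Proof.
rewrite /Qpoly big_ord_recl addr0; congr (_ * _); apply: eq_bigr => j _.
by rewrite lift0 -nat1r addrA.
Qed.

Lemma Qshift (x : L) i : Qpoly i (x + 1) - i%:R * Qpoly i.-1 (x + 1) = Qpoly i x.
Proof.
case: i => [|k]; first by rewrite mul0r subr0 /Qpoly !big_ord0.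
rewrite QS_r (QS_l x k) /= -nat1r; ring.
Qed.

Variable P : L -> L.
Hypothesis Padd : forall a b, P (a + b) = P a + P b.
Hypothesis Pmul : forall a b, P (a * b) = P a * b + a * P b.

Lemma P0 : P 0 = 0.
Proof. have h := Padd 0 0; rewrite addr0 in h; apply: (addrI (P 0)). by rewrite addr0 -h. Qed.

Lemma PN x : P (- x) = - P x.
Proof. have h := Padd x (- x); rewrite subrr P0 in h. by apply/eqP; rewrite -addr_eq0 addrC -h. Qed.

Lemma P1 : P 1 = 0.
Proof. have h := Pmul 1 1; rewrite !mulr1 mul1r in h; apply: (addrI (P 1)). by rewrite addr0 -h. Qed.

Lemma Pnat n : P n%:R = 0.
Proof. elim: n => [|n IH]; first by rewrite P0. by rewrite -nat1r Padd IH P1 addr0. Qed.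

Lemma Pint z : P z%:~R = 0.
Proof. case: z => n; first by rewrite -pmulrn Pnat. by rewrite NegzE mulrNz -pmulrn PN Pnat oppr0. Qed.

Lemma Pinv0 x : P x = 0 -> P x^-1 = 0.
Proof.
move=> h; have [->|nz] := eqVneq x 0; first by rewrite invr0 P0.
have := Pmul x x^-1; rewrite mulfV // P1 h mul0r add0r => /esym/eqP.
by rewrite mulf_eq0 (negbTE nz) => /eqP.
Qed.

Lemma Pratr a : P (ratr a) = 0.
Proof. by rewrite /ratr Pmul Pint Pinv0 ?Pint // mulr0 mul0r addr0. Qed.

Lemma Psum (n : nat) (F : 'I_n -> L) : P (\sum_(i < n) F i) = \sum_(i < n) P (F i).
Proof. exact: (big_morph P Padd P0). Qed.

Lemma Pexp (f y : L) : f * y = 1 -> forall i, P (y ^+ i) = - (i%:R * P f * y ^+ i.+1).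
Proof.
move=> fy.
have Py : P y = - (P f * y * y).
  have := Pmul f y; rewrite fy P1 => /esym h.
  have : y * (P f * y + f * P y) = 0 by rewrite h mulr0.
  rewrite mulrDr [y * (f * _)]mulrA (mulrC y f) fy mul1r => /eqP; rewrite addr_eq0 => /eqP h2.
  by rewrite -[P y]opprK -h2 mulrC.
elim=> [|i IH]; first by rewrite expr0 P1 mul0r mul0r oppr0.
rewrite exprS Pmul IH Py !exprS -nat1r; ring.
Qed.

End Aux.

Lemma intr_neq0 (L : fieldType) : [pchar L] =i pred0 ->
  forall z : int, z != 0 -> (z%:~R : L) != 0.
Proof.
move=> /pcharf0P h [] n nz.
  by change ((n%:R : L) != 0); rewrite h; apply: contra nz => /eqP ->.
by rewrite NegzE mulrNz oppr_eq0 -pmulrn h.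
Qed.

Lemma ratr_frac (L : fieldType) : [pchar L] =i pred0 -> forall u v : int, v != 0 ->
  ratr (u%:~R / v%:~R : rat) = (u%:~R / v%:~R : L).
Proof.
move=> ch u v vnz; set x := (u%:~R / v%:~R : rat).
have hr : (numq x * v = u * denq x)%R.
  apply: (intr_inj (R := rat)); rewrite !intrM numqE /x.
  by rewrite mulrAC divfK // intr_eq0.
rewrite /ratr; apply/eqP; rewrite eqr_div ?intr_neq0 ?denq_neq0 //.
by rewrite -!intrM hr.
Qed.

Lemma ratrD1 (L : fieldType) : [pchar L] =i pred0 -> forall a : rat,
  ratr (a + 1) = ratr a + 1 :> L.
Proof.
move=> ch a.
have e : a + 1 = ((numq a + denq a)%:~R / (denq a)%:~R : rat).
  by rewrite intrD mulrDl divff ?intr_eq0 ?denq_neq0 // divq_num_den.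
rewrite e ratr_frac ?denq_neq0 // intrD mulrDl divff //.
by apply: intr_neq0 => //; exact: denq_neq0.
Qed.

Theorem mainTheorem15 (L : fieldType) (O : pred L) (f : L) (alpha : rat)
    (V : rat -> pred {poly L}) :
  [pchar L] =i pred0 ->
  is_subring O -> f \in O -> f != 0 ->
  is_Vfilt O f V ->
  (* tau_alpha is a morphism of D_X-modules on V^alpha *)
  [/\ (forall p q, p \in V alpha -> q \in V alpha ->
         tau alpha f (p + q) = tau alpha f p + tau alpha f q),
      (forall g p, g \in O -> p \in V alpha ->
         tau alpha f (g *: p) = g * tau alpha f p),
      (forall P p, is_der O P -> p \in V alpha ->
         tau alpha f (der_act P f p) = Mder_act P f alpha (tau alpha f p)),
  (* tau_{alpha+1}(t v) = tau_alpha(v) under w f^-alpha |-> (w f) f^-alpha-1 *)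
      (forall p, p \in V alpha ->
         tau (alpha + 1) f (t_act f p) = f * tau alpha f p)
  (* tau_alpha(d_t v) = alpha tau_{alpha+1}(v), w' f^-alpha-1 |-> (w'/f) f^-alpha *)
    & (forall p, p \in V (alpha + 1) ->
         tau alpha f (dt_act p) = ratr alpha * (tau (alpha + 1) f p / f))].
Proof.
move=> ch _ _ fnz _.
have fy : f * f^-1 = 1 by rewrite mulfV.
set y := f^-1 in fy *.
have sXle : forall p : {poly L}, (size (p * 'X)%R <= (size p).+1)%N.
  by move=> p; apply: (leq_trans (size_polyMleq _ _)); rewrite size_polyX addn2.
split.
- move=> p q _ _.
  rewrite !(tauE _ _ _ _ (maxn (size p) (size q))) ?leq_maxl ?leq_maxr ?size_polyD //.
  rewrite -big_split; apply: eq_bigr => i _; by rewrite coefD mulrDr mulrDl.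
- move=> g p _ _.
  rewrite !(tauE _ _ _ _ (size p)) ?size_scale_leq // mulr_sumr.
  apply: eq_bigr => i _; rewrite coefZ; ring.
- move=> P p [Padd Pmul _] _.
  set n := size p.
  have szd : (size (der_act P f p) <= n.+1)%N.
    apply: (leq_trans (size_polyD _ _)); rewrite geq_max size_polyN; apply/andP; split.
      by apply: leqW; exact: size_poly.
    by apply: (leq_trans (size_scale_leq _ _)); exact: sXle.
  rewrite (tauE _ _ _ _ n.+1 szd) (tauE _ _ _ p n) //.
  have PQ : forall i, P (Qpoly i (ratr alpha)) = 0.
    move=> i; apply: (big_ind (fun x => P x = 0)); first exact: P1.
      by move=> x1 x2 h1 h2; rewrite Pmul h1 h2 mulr0 mul0r addr0.
    by move=> j _; rewrite Padd Pratr // Pnat // addr0.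
  have -> : \sum_(i < n.+1) Qpoly i (ratr alpha) * (der_act P f p)`_i * f^-1 ^+ i =
     \sum_(i < n.+1) Qpoly i (ratr alpha) * P p`_i * f^-1 ^+ i -
     \sum_(i < n.+1) Qpoly i (ratr alpha) * (P f * (p * 'X)`_i) * f^-1 ^+ i.
    rewrite -sumrB; apply: eq_bigr => i _.
    by rewrite /der_act coefB coefZ coef_map_id0 ?P0 // mulrBr mulrBl.
  rewrite big_ord_recr big_ord_recl /= nth_default // P0 // mulr0 mul0r addr0.
  rewrite coefMX /= !mulr0 mul0r add0r.
  rewrite /Mder_act (@Psum _ _ Padd) mulr_sumr !mulr_suml -!sumrB.
  apply: eq_bigr => i _.
  rewrite coefMX /bump /= add1n !Pmul PQ (@Pexp _ _ Pmul _ _ fy) QS_r exprS.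
  by field.
- move=> p _.
  set n := size p.
  rewrite (tauE _ _ _ _ n.+1) ?(leq_trans (size_poly _ _)) // (tauE _ _ _ p n.+1) //.
  have E : \sum_(i < n.+1) Qpoly i (ratr (alpha + 1)) * ((i.+1)%:R * p`_i.+1) * f^-1 ^+ i
      = f * \sum_(i < n.+1) i%:R * Qpoly i.-1 (ratr (alpha + 1)) * p`_i * f^-1 ^+ i.
    rewrite big_ord_recr big_ord_recl /= (nth_default 0 (leqW (leqnn n))) !mulr0 mul0r addr0.
    rewrite !mul0r add0r mulr_sumr; apply: eq_bigr => i _.
    by rewrite /bump /= add1n exprS; field.
  have -> : \sum_(i < n.+1) Qpoly i (ratr (alpha + 1)) * (t_act f p)`_i * f^-1 ^+ i =
     \sum_(i < n.+1) Qpoly i (ratr (alpha + 1)) * (f * p`_i) * f^-1 ^+ i -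
     \sum_(i < n.+1) Qpoly i (ratr (alpha + 1)) * ((i.+1)%:R * p`_i.+1) * f^-1 ^+ i.
    rewrite -sumrB; apply: eq_bigr => i _.
    rewrite /t_act coef_poly; case: ltnP => h.
      by rewrite mulrBr mulrBl.
    by rewrite !nth_default ?h ?(leqW h) // !mulr0 !mul0r subr0.
  rewrite E !mulr_sumr -sumrB; apply: eq_bigr => i _.
  rewrite (@ratrD1 _ ch) -(Qshift _ (ratr alpha)); by field.
- move=> p _.
  rewrite /dt_act (tauE _ _ _ _ (size p).+1) ?sXle // (tauE _ _ _ p (size p)) //.
  rewrite big_ord_recl coefMX /= mulr0 mul0r add0r mulr_suml mulr_sumr.
  apply: eq_bigr => i _; rewrite /bump /= add1n coefMX /= QS_l exprS (@ratrD1 _ ch).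
  by rewrite /y; field.
Qed.
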